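(* Let $p$ be a prime number and let $n$ be a positive integer. Then $S_n(n)\equiv p \pmod{n}$ (i.e. $n\in\mathcal{M}_p$) if and only if all of the following hold: (i) the prime power factorization of $n$ has the form $n=p^s q_1\cdots q_r$, where $0\le s\le 2$ and $q_1,\dots,q_r$ are pairwise distinct primes different from $p$ (each appearing with exponent $1$); (ii) for every $i\in\{1,\dots,r\}$, $q_i-1$ divides $n$ and $n/q_i+p\equiv 0\pmod{q_i}$; (iii) if $s=1$, then $p-1\nmid n$; (iv) if $s=2$, then $p-1\mid n$ and $n/p^2+1\equiv 0\pmod{p}$.
   Context: For positive integers $k,n$ let $S_k(n)=\sum_{i=1}^{n} i^k$. For an integer $a$, $\mathcal{M}_a$ denotes the set of positive integers $n$ such that $S_n(n)\equiv a\pmod{n}$. *)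

(* Defs.v *)
From mathcomp Require Import all_boot.
Set Implicit Arguments. Unset Strict Implicit. Unset Printing Implicit Defensive.

Definition S (k n : nat) : nat := \sum_(1 <= i < n.+1) i ^ k.

(* Main.v *)
Require Import Defs.
From mathcomp Require Import all_boot all_algebra all_fingroup all_solvable.

Definition T (k n : nat) : nat := \sum_(0 <= i < n) i ^ k.
Lemma nonroot q k : prime q -> ~~ (q.-1 %| k) -> exists a, coprime a q /\ a ^ k %% q != 1.
Proof.
move=> pq nd.
have q1 : 1 < q by apply: prime_gt1.
have /cyclicP [x Hx] := units_Zp_cyclic pq.
have ox : #[x]%g = q.-1.
  by rewrite /order -Hx card_units_Zp ?prime_gt0 // totient_prime.
exists (val (val x)); split.
  have h := @unitZpE q (val (val x)) q1.
  rewrite natr_Zp in h. rewrite coprime_sym -h. exact: valP.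
apply/negP => /eqP h; move: nd; rewrite -ox order_dvdn.
move/negP; apply; apply/eqP; apply: val_inj; apply: val_inj.
rewrite unit_Zp_expg /= [X in _ %% X = _]Zp_cast // [in RHS]Zp_cast // h modn_small.
Qed.
Lemma S_T_eq k m : S k m + 0 ^ k = T k m + m ^ k.
Proof.
rewrite /S /T.
case: m => [|m]; first by rewrite !big_geq.
rewrite big_nat_recr //= [X in _ = X + _](@big_ltn _ _ _ 0) //.
by rewrite addnAC [0 ^ k + _]addnC.
Qed.

Lemma S_T k m d : 0 < k -> d %| m -> S k m = T k m %[mod d].
Proof.
move=> k0 dm; have := S_T_eq k m; rewrite exp0n // addn0 => ->.
rewrite -modnDmr.
have -> : m ^ k %% d = 0.
  apply/eqP; rewrite -/(dvdn d _); apply: dvdn_trans dm _.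
  by rewrite -(prednK k0) expnS dvdn_mulr.
by rewrite addn0.
Qed.

Lemma T_period k m c : T k (c * m) = c * T k m %[mod m].
Proof.
elim: c => [|c IH]; first by rewrite /T !mul0n big_geq.
rewrite mulSnr /T (@big_cat_nat _ _ _ (c * m)) //= ?leq_addr //.
rewrite -[c * m]add0n big_addn add0n addKn.
rewrite -modnDml -/(T k (c * m)) IH modnDml mulSnr.
rewrite -/(T k m) -modnDmr -[in RHS]modnDmr.
congr ((_ + _) %% _).
rewrite /T.
apply/eqP; rewrite -[X in X == _]modn_summ -[X in _ == X]modn_summ; apply/eqP.
congr (_ %% _); apply: eq_bigr => i _.
by rewrite -modnXm addnC modnMDl modnXm.
Qed.
Lemma modn_cancel m a x y : coprime a m -> a * x = a * y %[mod m] -> x = y %[mod m].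
Proof.
move=> co.
wlog le : x y / x <= y.
  move=> H; case: (leqP x y) => [|/ltnW] h; first exact: H.
  by move=> e; apply/esym/H => //; apply/esym.
move=> /esym/eqP; rewrite eqn_mod_dvd ?leq_mul2l ?le ?orbT // -mulnBr.
rewrite Gauss_dvdr; last by rewrite coprime_sym.
by rewrite -eqn_mod_dvd // eq_sym => /eqP.
Qed.

Lemma T_zero m k a : 0 < m -> coprime a m -> coprime (a ^ k).-1 m -> T k m %% m = 0.
Proof.
move=> m0 co co2.
have [->|m1] := eqVneq m 1; first by rewrite modn1.
have a0 : 0 < a.
  rewrite lt0n; apply/negP => /eqP a0; move: co; rewrite a0 /coprime gcd0n.
  by move/negP: m1.
set h : 'I_m -> 'I_m := fun i => Ordinal (ltn_pmod (a * i) m0).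
have hinj : injective h.
  move=> i j /(congr1 val) /= e; apply: val_inj => /=.
  have := @modn_cancel m a i j co e.
  by rewrite !modn_small.
have E : T k m = \sum_(i < m) (h i : nat) ^ k.
  rewrite /T big_mkord.
  exact: (reindex_inj hinj).
have E2 : T k m = a ^ k * T k m %[mod m].
  rewrite {1}E /T big_mkord big_distrr /=.
  apply/eqP; rewrite -[X in X == _]modn_summ -[X in _ == X]modn_summ; apply/eqP.
  congr (_ %% _); apply: eq_bigr => i _.
  by rewrite /= modnXm expnMn.
have ak0 : 0 < a ^ k by rewrite expn_gt0 a0.
move: E2 => /eqP; rewrite eq_sym eqn_mod_dvd; last by rewrite leq_pmull.
rewrite -{2}[T k m]mul1n -mulnBl subn1 Gauss_dvdr; last by rewrite coprime_sym.
by move/eqP.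
Qed.
Lemma T_full q e k : prime q -> 0 < e -> totient (q ^ e) %| k -> e <= k ->
  T k (q ^ e) = totient (q ^ e) %[mod q ^ e].
Proof.
move=> pq e0 tk ek.
set m := q ^ e.
have m1 : 1 < m by rewrite /m -{1}(expn0 q) ltn_exp2l ?prime_gt1.
rewrite /T totient_count_coprime.
apply/eqP; rewrite -[X in X == _]modn_summ -[X in _ == X]modn_summ; apply/eqP.
congr (_ %% _); apply: eq_bigr => i _.
case: (boolP (coprime m i)) => co.
  rewrite -(divnK tk) mulnC expnM -modnXm.
  have := Euler_exp_totient (a := i) (n := m); rewrite coprime_sym => /(_ co) ->.
  by rewrite modnXm exp1n modn_small.
move: co; rewrite /m coprime_pexpl // prime_coprime // negbK => qi.
rewrite mod0n; apply/eqP; rewrite -/(dvdn _ _).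
apply: dvdn_trans (dvdn_exp2l q ek) _.
by rewrite dvdn_exp2r.
Qed.
Lemma arith0 q e p : prime p -> prime q -> 0 < e ->
  (0 = p %[mod q ^ e]) <-> (q = p /\ e = 1).
Proof.
move=> pp pq e0; split; last by move=> [-> ->]; rewrite expn1 modnn mod0n.
move/esym/eqP; rewrite mod0n -/(dvdn _ _) => h.
have qp : q %| p by apply: dvdn_trans h; rewrite -{1}(expn1 q) dvdn_exp2l.
move: qp; rewrite dvdn_prime2 // => /eqP qp; subst q; split => //.
move: h; rewrite -{2}(expn1 p) dvdn_Pexp2l ?prime_gt1 // => h.
by apply/eqP; rewrite eqn_leq h.
Qed.

Lemma keyK q c x : prime q ->
  (c * q.-1 = x %[mod q]) <-> ((c + x) %% q = 0).
Proof.
move=> pq; split.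
  move/eqP; rewrite -(eqn_modDr c) -mulnSr prednK ?prime_gt0 // modnMl addnC.
  by move/eqP/esym.
move=> h; apply/eqP; rewrite -(eqn_modDr c) -mulnSr prednK ?prime_gt0 // modnMl addnC.
by rewrite h.
Qed.

Lemma arith q e c p : prime p -> prime q -> 0 < e -> ~~ (q %| c) ->
  (c * (q.-1 * q ^ e.-1) = p %[mod q ^ e]) <->
  (if q == p then e = 2 /\ (c + 1) %% p = 0 else e = 1 /\ (c + p) %% q = 0).
Proof.
move=> pp pq e0 qc.
have q1 := prime_gt1 pq.
case: eqP => [<-|qp].
  case: e e0 => [//|[|[|e]]] _.
  - rewrite expn0 muln1 expn1; split => [|[]] // /(keyK _ _ _ pq) /eqP.
    by rewrite -/(dvdn _ _) dvdn_addl ?dvdnn // (negbTE qc).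
  - change (2.-1) with 1; rewrite expn1.
    have E1 : c * (q.-1 * q) %% q ^ 2 = (c * q.-1 %% q) * q.
      by rewrite muln_modl mulnA expnS expn1.
    have E2 : q %% q ^ 2 = (1 %% q) * q.
      by rewrite muln_modl mul1n expnS expn1.
    rewrite E1 E2; split.
      move/eqP; rewrite eqn_pmul2r ?prime_gt0 // => /eqP.
      by move=> /(keyK _ _ _ pq) h.
    move=> [_ h]; apply/eqP; rewrite eqn_pmul2r ?prime_gt0 //.
    by apply/eqP; apply/(keyK _ _ _ pq).
  - split => [|[]] //.
    move=> h; have := congr1 (modn^~ (q ^ 2)) h.
    rewrite !modn_dvdm ?dvdn_exp2l //.
    have -> : (c * (q.-1 * q ^ e.+3.-1)) %% (q ^ 2) = 0.
      apply/eqP; rewrite -/(dvdn _ _); apply: dvdn_mull; apply: dvdn_mull.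
      by rewrite dvdn_exp2l.
    rewrite modn_small; first by move=> h0; move: (prime_gt0 pq); rewrite -h0.
    by rewrite -{1}(expn1 q) ltn_exp2l.
case: e e0 => [//|[|e]] _.
  rewrite expn0 muln1 expn1; split => [/(keyK _ _ _ pq)|[_ /(keyK _ _ _ pq)]] //.
split => [|[]] //.
move=> h; have := congr1 (modn^~ q) h.
have dq : q %| q ^ e.+2 by rewrite -{1}(expn1 q) dvdn_exp2l.
rewrite !modn_dvdm //.
have -> : (c * (q.-1 * q ^ e.+2.-1)) %% q = 0.
  apply/eqP; rewrite -/(dvdn _ _); apply: dvdn_mull; apply: dvdn_mull.
  by rewrite -{1}(expn1 q) dvdn_exp2l.
move/esym/eqP; rewrite -/(dvdn _ _) dvdn_prime2 //.
by move/eqP/qp.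
Qed.
Definition P (p n q e : nat) : Prop :=
  if q == p then (e = 1 /\ ~~ (p.-1 %| n)) \/ (e = 2 /\ p.-1 %| n /\ (n %/ p ^ 2 + 1) %% p = 0)
  else (e = 1 /\ q.-1 %| n /\ (n %/ q + p) %% q = 0).

Lemma local p q e c n : prime p -> prime q -> 0 < e -> ~~ (q %| c) -> n = c * q ^ e -> 0 < n ->
  (S n n = p %[mod q ^ e]) <-> P p n q e.
Proof.
move=> pp pq e0 qc nE n0.
have q1 := prime_gt1 pq.
have Sred : S n n = c * T n (q ^ e) %[mod q ^ e].
  rewrite (@S_T n n (q ^ e)) //; last by rewrite nE dvdn_mull.
  by rewrite {2}nE T_period.
have en : e <= n.
  apply: ltnW; apply: leq_trans (ltn_expl e q1) _.
  by apply: dvdn_leq n0 _; rewrite nE dvdn_mull.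
have cE : n %/ q ^ e = c by rewrite nE mulnK // expn_gt0 prime_gt0.
rewrite /P; case: (boolP (q.-1 %| n)) => hq.
- have tk : totient (q ^ e) %| n.
    rewrite totient_pfactor // Gauss_dvd; last by rewrite coprimeXr // coprimePn // prime_gt0.
    by rewrite hq /=; apply: dvdn_trans (dvdn_exp2l q (leq_pred e)) _; rewrite nE dvdn_mull.
  have E : S n n = c * (q.-1 * q ^ e.-1) %[mod q ^ e].
    by rewrite Sred -modnMmr T_full // modnMmr totient_pfactor.
  rewrite E; apply: iff_trans (arith _ _ _ _ pp pq e0 qc) _.
  case: eqP => [qp|qp]; first subst q.
    split; first by move=> [e2 h]; right; subst e; rewrite cE hq.
    by case => [[_ /negP //]|[e2 [_ h]]]; subst e; rewrite -cE.
  split; first by move=> [e1 h]; subst e; rewrite expn1 in cE; rewrite cE.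
  by move=> [e1 [_ h]]; subst e; rewrite expn1 in cE; rewrite -cE.
- have [a [co ne]] := @nonroot q n pq hq.
  have a0 : 0 < a.
    rewrite lt0n; apply/negP => /eqP a0; move: co; rewrite a0 /coprime gcd0n.
    by move/eqP => q1'; move: q1; rewrite q1'.
  have Tz : T n (q ^ e) %% q ^ e = 0.
    apply: (@T_zero _ n a); first by rewrite expn_gt0 prime_gt0.
      by rewrite coprimeXr.
    rewrite coprimeXr // coprime_sym prime_coprime //; apply/negP => h.
    move: ne; rewrite -(prednK (n := a ^ n)) ?expn_gt0 ?a0 // -addn1 -modnDml (eqP h).
    by rewrite add0n modn_small.
  have E : S n n = 0 %[mod q ^ e] by rewrite Sred -modnMmr Tz muln0.
  rewrite E; apply: iff_trans (arith0 _ _ _ pp pq e0) _.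
  case: eqP => [qp|qp].
    split; first by move=> [_ e1]; left; rewrite -qp.
    by case => [[e1 _]//|[_ [h _]]]; move: hq; rewrite qp h.
  by split => [[]|[_ []]].
Qed.
Lemma eq_from_log m n : 0 < m -> 0 < n -> (forall r, prime r -> logn r m = logn r n) -> m = n.
Proof.
move=> m0 n0 h; rewrite -(partnT m0) -(partnT n0); apply: eq_partn_from_log => // r _.
by case: (boolP (prime r)) => pr; [apply: h | rewrite /logn (negbTE pr)].
Qed.

Lemma mod_part x y n : 0 < n ->
  (x = y %[mod n]) <-> (forall q, prime q -> q %| n -> x = y %[mod q ^ logn q n]).
Proof.
move=> n0.
wlog le : x y / y <= x.
  move=> H; case: (leqP y x) => [|/ltnW] h; first exact: H.
  split => [/esym e q pq qn|e]; first by apply/esym; apply: (proj1 (H _ _ h) e).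
  by apply/esym; apply/(H _ _ h) => q pq qn; apply/esym/e.
split.
  move=> /eqP; rewrite eqn_mod_dvd // => d q pq qn; apply/eqP; rewrite eqn_mod_dvd //.
  by apply: dvdn_trans d; rewrite -p_part dvdn_part.
move=> h; apply/eqP; rewrite eqn_mod_dvd //; apply/dvdn_partP => // q.
rewrite mem_primes => /and3P [pq _ qn]; rewrite p_part -eqn_mod_dvd //.
by apply/eqP; apply: h.
Qed.

Lemma S_iff_P p n : prime p -> 0 < n ->
  (S n n = p %[mod n]) <-> (forall q, prime q -> q %| n -> P p n q (logn q n)).
Proof.
move=> pp n0; apply: iff_trans (@mod_part (S n n) p n n0) _.
split => h q pq qn; have [c qc nE] := pfactor_coprime pq n0;
  (have L := @local p q (logn q n) c n pp pq _ _ nE n0);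
  (have e0 : 0 < logn q n by rewrite logn_gt0 mem_primes pq n0);
  (have qc' : ~~ (q %| c) by rewrite -prime_coprime).
  by apply/(L e0 qc'); apply: h.
by apply/(L e0 qc'); apply: h.
Qed.
Lemma prod_gt0 qs : all prime qs -> 0 < \prod_(q <- qs) q.
Proof.
elim: qs => [|q qs IH] /=; first by rewrite big_nil.
by move/andP=> [pq aq]; rewrite big_cons muln_gt0 prime_gt0 // IH.
Qed.

Lemma logn_prod r qs : all prime qs -> logn r (\prod_(q <- qs) q) = count_mem r qs.
Proof.
elim: qs => [|q qs IH] /=; first by rewrite big_nil logn1.
move/andP=> [pq aq]; rewrite big_cons lognM; [|exact: prime_gt0|exact: prod_gt0].
by rewrite IH // logn_prime // eq_sym.
Qed.

Lemma logN p s qs r : prime p -> uniq qs -> all prime qs ->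
  logn r (p ^ s * \prod_(q <- qs) q) = (r == p) * s + (r \in qs).
Proof.
move=> pp uq aq; rewrite lognM; [|by rewrite expn_gt0 prime_gt0|exact: prod_gt0].
by rewrite lognX logn_prime // logn_prod // count_uniq_mem // mulnC.
Qed.

Theorem theorem1 (p n : nat) (hp : prime p) (hn : 0 < n) :
  S n n = p %[mod n] <->
  exists (s : nat) (qs : seq nat),
    (* (i) n = p^s q_1 ... q_r, 0 <= s <= 2, q_i distinct primes <> p *)
    (s <= 2 /\ uniq qs /\ all prime qs /\ p \notin qs /\
     n = p ^ s * \prod_(q <- qs) q) /\
    (* (ii) *)
    (forall q, q \in qs -> (q.-1 %| n) /\ (n %/ q + p) %% q = 0) /\
    (* (iii) *)
    (s = 1 -> ~~ (p.-1 %| n)) /\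
    (* (iv) *)
    (s = 2 -> (p.-1 %| n) /\ (n %/ p ^ 2 + 1) %% p = 0).
Proof.
apply: iff_trans (@S_iff_P p n hp hn) _.
split.
  move=> h.
  have hP : forall q, q \in primes n -> P p n q (logn q n).
    by move=> q; rewrite mem_primes => /and3P [pq _ qn]; apply: h.
  have hpp : p \in primes n -> P p n p (logn p n) by apply: hP.
  rewrite /P eqxx in hpp.
  exists (logn p n), [seq q <- primes n | q != p].
  have uq : uniq [seq q <- primes n | q != p] by rewrite filter_uniq // primes_uniq.
  have aq : all prime [seq q <- primes n | q != p].
    by apply/allP => q; rewrite mem_filter mem_primes => /andP [_ /and3P []].
  split; [split; [|split; [|split; [|split]]]|split; [|split]] => //.
  - case: (boolP (p \in primes n)) => pn; first by case: (hpp pn) => [[->]|[->]].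
    by move: pn; rewrite -logn_gt0 lt0n negbK => /eqP ->.
  - by rewrite mem_filter eqxx.
  - apply: eq_from_log => //; first by rewrite muln_gt0 expn_gt0 prime_gt0 // prod_gt0.
    move=> r pr; rewrite logN //.
    case: (eqVneq r p) => [->|rp]; first by rewrite mem_filter eqxx /= mul1n addn0.
    rewrite mul0n add0n mem_filter rp /=.
    case: (boolP (r \in primes n)) => rn.
      by have := hP r rn; rewrite /P (negbTE rp) => [[-> _]].
    by move: rn; rewrite -logn_gt0 lt0n negbK => /eqP ->.
  - move=> q; rewrite mem_filter => /andP [qp qn].
    by have := hP q qn; rewrite /P (negbTE qp) => [[_ []]].
  - move=> s1; have pn : p \in primes n by rewrite -logn_gt0 s1.
    by case: (hpp pn) => [[]|[]] //; rewrite s1.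
  - move=> s2; have pn : p \in primes n by rewrite -logn_gt0 s2.
    by case: (hpp pn) => [[]|[_ []]] //; rewrite s2.
move=> [s [qs [[s2 [uq [aq [pq nE]]]] [h2 [h3 h4]]]]] q prq qn.
have lq : logn q n = (q == p) * s + (q \in qs) by rewrite nE logN.
have lpos : 0 < logn q n by rewrite logn_gt0 mem_primes prq hn.
rewrite /P; case: (eqVneq q p) => [qp|qp].
  subst q; rewrite (negbTE pq) addn0 eqxx /= mul1n in lq.
  rewrite lq in lpos *; clear nE lq h2.
  move: s2 lpos h3 h4; case: s => [|[|[|]]] //= _ _ h3 h4.
    by left; split => //; apply: h3.
  by right; split => //; apply: h4.
rewrite (negbTE qp) /= mul0n add0n in lq; rewrite lq.
have qq : q \in qs by move: lpos; rewrite lq lt0n; case: (q \in qs).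
by rewrite qq; split => //; apply: h2.
Qed.
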